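(* Let $R$ be a ring and let $a\in R$ be such that for some integer $n\geq 2$ the element $a^n$ is regular, i.e., $a^n=a^nba^n$ for some $b\in R$. Then there exists an idempotent $e\in aRa$ such that $(a(1-e))^n=0$; that is, $a$ is a D-regularly nil clean element of index at most $n$.
   Context: All rings are associative with identity $1\neq 0$. An element $a\in R$ is called D-regularly nil clean of index at most $k$ if there is an idempotent $e\in aRa$ with $(a(1-e))^k=0$. *)

(* Defs.v *)
From HB Require Import structures.
From mathcomp Require Import all_boot all_order all_algebra.
Set Implicit Arguments. Unset Strict Implicit. Unset Printing Implicit Defensive.
Import GRing.Theory.
Local Open Scope ring_scope.

Definition regular_elt (R : nzRingType) (x : R) : Prop :=
  exists b : R, x = x * b * x.

Definition DRNC_index_le (R : nzRingType) (a : R) (k : nat) : Prop :=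
  exists e : R, (exists r : R, e = a * r * a) /\ e * e = e /\
                (a * (1 - e)) ^+ k = 0.

(* Main.v *)
Require Import Defs.
From HB Require Import structures.
From mathcomp Require Import all_boot all_order all_algebra.
From mathcomp Require Import zify.
Import GRing.Theory.
Local Open Scope ring_scope.

Section Aux.
Variables (R : nzRingType) (a c : R) (n : nat).
Hypothesis Hc : a ^+ n * c * a ^+ n = a ^+ n.
Hypothesis Hc2 : c * a ^+ n * c = c.

Definition ek (k : nat) : R := a ^+ k * c * a ^+ (n - k).

Lemma qshift k j : (j <= k)%N -> (k <= n)%N ->
  (1 - ek k) * a ^+ j = a ^+ j * (1 - ek (k - j)).
Proof.
move=> jk kn; rewrite mulrBl mulrBr mul1r mulr1; congr (_ - _).
rewrite /ek -!mulrA -exprD.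
have -> : (n - k + j = n - (k - j))%N by lia.
rewrite !mulrA -exprD; have -> : (j + (k - j) = k)%N by lia.
by [].
Qed.

Lemma powq j : (j < n)%N ->
  exists X, (a * (1 - ek n.-1)) ^+ j.+1 = a ^+ j.+1 * (1 - ek (n.-1 - j)) * X.
Proof.
elim: j => [|j IH] jn.
  by exists 1; rewrite expr1 mulr1 subn0.
have [X HX] := IH (ltnW jn).
exists ((1 - ek (n.-1 - j)) * X); rewrite exprS HX !mulrA -(mulrA a) qshift; try lia.
by rewrite mulrA -exprS ?mulrA.
Qed.
End Aux.

Theorem proposition2p5 (R : nzRingType) (a : R) (n : nat) :
  (2 <= n)%N -> regular_elt (a ^+ n) -> DRNC_index_le a n.
Proof.
move=> n2 [b Hb].
set c := b * a ^+ n * b.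
have Hc : a ^+ n * c * a ^+ n = a ^+ n by rewrite /c !mulrA -Hb -Hb.
have E : b * a ^+ n * b * a ^+ n = b * a ^+ n.
  by rewrite -(mulrA b (a ^+ n) b) -(mulrA b) -Hb.
have Hc2 : c * a ^+ n * c = c by rewrite /c !mulrA E E.
clearbody c.
exists (@ek R a c n n.-1); split; [|split].
- exists (a ^+ (n.-2) * c); rewrite /ek.
  have -> : (n - n.-1 = 1)%N by lia.
  rewrite expr1 !mulrA -exprS.
  by have -> : (n.-2).+1 = n.-1 by lia.
- rewrite /ek -!mulrA (mulrA (a ^+ (n - n.-1))) -exprD.
  have -> : (n - n.-1 + n.-1 = n)%N by lia.
  by rewrite !mulrA -(mulrA (a ^+ n.-1)) -(mulrA (a ^+ n.-1)) Hc2.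
- have [X HX] := @powq R a c n (n.-1) ltac:(lia).
  rewrite (prednK (ltnW n2)) in HX.
  rewrite HX; have -> : (n.-1 - n.-1 = 0)%N by lia.
  rewrite /ek subn0 expr0 mul1r mulrBr mulr1 mulrA Hc subrr mul0r //.
Qed.
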